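(* Let $G=(V,E,w)$ be a finite unweighted symmetric graph, i.e. $V$ is a finite set, $w:V\times V\to\{0,1\}$ with $w(i,j)=w(j,i)$, $E=\{(i,j): w(i,j)\neq 0\}$, and $N(i)=\{j\in V: (i,j)\in E\}$. Let $V_0\subseteq V$ be a set of boundary nodes, and let the potential function be constant, $\rho(i)=1$ for all $i\in V$. Suppose $f:V\to\mathbb{R}$ satisfies the generalized geodesic distance equation with the supremum norm ($p=\infty$): $$\rho(i)\,\|(\nabla^-_w f)(i)\|_\infty = 1 \quad \text{for } i\in V\setminus V_0,\qquad f(i)=0 \quad \text{for } i\in V_0.$$ Then $f$ satisfies the shortest-path (Dijkstra) distance equation $$f(i)=\min_{j\in N(i)}\{f(j)+1\}\quad \text{for } i\in V\setminus V_0,\qquad f(i)=0\quad\text{for } i\in V_0.$$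
   Context: For $a\in\mathbb{R}$, $(a)_+=\max\{a,0\}$ and $(a)_-=-\min\{a,0\}$. The negative directional graph difference operator is $(d^-_w f)(i,j)=\sqrt{w(i,j)}\,(f(j)-f(i))_-$ for $i,j\in V$, and the negative graph gradient at $i$ is the vector $(\nabla^-_w f)(i)=[(d^-_w f)(i,j): j\in V]^T$. Its supremum norm is $\|(\nabla^-_w f)(i)\|_\infty=\max_{j\in V}|(d^-_w f)(i,j)|$. *)

(* Defs.v *)
From mathcomp Require Import all_boot all_order all_algebra.
Set Implicit Arguments. Unset Strict Implicit. Unset Printing Implicit Defensive.
Import Order.TTheory GRing.Theory Num.Theory.
Local Open Scope ring_scope.

Section Defs.
Variables (R : rcfType) (V : finType).

Definition negpart (a : R) : R := - Num.min a 0.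

Definition dneg (w : V -> V -> R) (f : V -> R) (i j : V) : R :=
  Num.sqrt (w i j) * negpart (f j - f i).

(* || (nabla^-_w f)(i) ||_oo = max_{j in V} |(d^-_w f)(i,j)|
   (V is nonempty whenever i : V exists; the norms are >= 0, so the
   default 0 of the big max is harmless) *)
Definition gradneg_supnorm (w : V -> V -> R) (f : V -> R) (i : V) : R :=
  \big[Num.max/0]_(j : V) `|dneg w f i j|.

Definition nbhd (w : V -> V -> R) (i : V) : {set V} := [set j | w i j != 0].

Definition is_min_over (S : {set V}) (g : V -> R) (x : R) : Prop :=
  (exists2 j, j \in S & x = g j) /\ (forall j, j \in S -> x <= g j).

End Defs.

(* Main.v *)
Require Import Defs.
From mathcomp Require Import all_boot all_order all_algebra.
Import Order.TTheory GRing.Theory Num.Theory.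
Local Open Scope ring_scope.

Theorem proposition1 (R : rcfType) (V : finType) (w : V -> V -> R)
    (V0 : {set V}) (rho f : V -> R)
    (w01 : forall i j, w i j = 0 \/ w i j = 1)
    (wsym : forall i j, w i j = w j i)
    (rho1 : forall i, rho i = 1)
    (Heik : forall i, i \notin V0 -> rho i * gradneg_supnorm w f i = 1)
    (Hbd : forall i, i \in V0 -> f i = 0) :
  (forall i, i \notin V0 -> is_min_over (nbhd w i) (fun j => f j + 1) (f i)) /\
  (forall i, i \in V0 -> f i = 0).
Proof.
split=> // i Hi.
have H1 := Heik i Hi; rewrite rho1 mul1r in H1.
have Hd : forall j, `|dneg w f i j| = if w i j == 0 then 0 else Num.max (f i - f j) 0.
  move=> j; rewrite /dneg /negpart.
  case: (w01 i j) => ->; rewrite ?eqxx ?sqrtr0 ?mul0r ?normr0 //.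
  rewrite oner_eq0 sqrtr1 mul1r -opprB.
  rewrite -{1}(oppr0 R) -oppr_max opprK ger0_norm // le_max lexx orbT //.
split.
- have : (\big[Num.max/0]_(j : V) `|dneg w f i j| == 0) ||
         [exists j, \big[Num.max/0]_(j : V) `|dneg w f i j| == `|dneg w f i j| ].
    apply: (big_ind (fun x => (x == 0) || [exists j, x == `|dneg w f i j|])).
    + by rewrite eqxx.
    + move=> x y Hx Hy; case: (leP x y) => _; [exact: Hy| exact: Hx].
    + by move=> j _; apply/orP; right; apply/existsP; exists j.
  rewrite -/(gradneg_supnorm w f i) H1 oner_eq0 /= => /existsP [j /eqP].
  rewrite Hd; case: eqP => [_|/eqP wn]; first by move=> h; move: (@oner_neq0 R); rewrite h eqxx.
  move=> Hm; exists j; first by rewrite inE.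
  move: Hm; rewrite /Num.max; case: ifP => _ h; first by move: (@oner_neq0 R); rewrite h eqxx.
  by rewrite h addrC subrK.
- move=> j; rewrite inE => wn.
  have h : `|dneg w f i j| <= gradneg_supnorm w f i by rewrite /gradneg_supnorm (bigD1 j) //= le_max lexx.
  move: h.
  rewrite H1 Hd (negbTE wn) => h.
  have : f i - f j <= 1 by apply: le_trans h; rewrite le_max lexx.
  by rewrite lerBlDr addrC.
Qed.
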